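(* Let $\xi$ be a highest $\ell_{\mathbf s}$-weight vector of highest $\ell_{\mathbf s}$-weight $\boldsymbol\lambda(u)=(\lambda_i(u))_{1\le i\le\kappa}$ in a representation of the super Yangian $\mathscr Y_{\mathbf s}$. Then for each $1\le i\le\kappa$, $$t'_{ii}(u)\,\xi=\lambda_i'(u)\,\xi,\qquad \lambda_i'(u)=\frac{1}{\lambda_{i}(u+\rho_{i+1})}\prod_{k=i+1}^{\kappa} \frac{\lambda_k(u+\rho_k)}{\lambda_{k}(u+\rho_{k+1})}.$$
   Context: Fix integers $m,n\ge 0$ and put $\kappa=m+n$. A parity sequence is $\mathbf s=(s_1,\dots,s_\kappa)\in\{\pm1\}^\kappa$ with exactly $m$ entries equal to $1$; write $|i|\in\mathbb Z_2$ with $s_i=(-1)^{|i|}$. Let $V=\mathbb C^{m|n}$ have basis $v_1,\dots,v_\kappa$ with $v_i$ of parity $|i|$, and let $E_{ij}\in\mathrm{End}(V)$ be the matrix units. The super Yangian $\mathscr Y_{\mathbf s}$ is the unital associative superalgebra generated by $t_{ij}^{(r)}$ ($1\le i,j\le\kappa$, $r\ge1$) of parity $|i|+|j|$ with defining relations $[t_{ij}(u),t_{kl}(v)]=\frac{(-1)^{|i||j|+|i||k|+|j||k|}}{u-v}\big(t_{kj}(u)t_{il}(v)-t_{kj}(v)t_{il}(u)\big)$ (supercommutator), where $t_{ij}(u)=\delta_{ij}+\sum_{r\ge1}t_{ij}^{(r)}u^{-r}$. Put $T(u)=\sum_{i,j}(-1)^{|i||j|+|j|}t_{ij}(u)\otimes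 E_{ij}$ and define the series $t'_{ij}(u)$ by $T(u)^{-1}=\sum_{i,j}(-1)^{|i||j|+|j|}t'_{ij}(u)\otimes E_{ij}$. A nonzero vector $\xi$ in a $\mathscr Y_{\mathbf s}$-module is a highest $\ell_{\mathbf s}$-weight vector of highest $\ell_{\mathbf s}$-weight $\boldsymbol\lambda(u)$ if $t_{ij}(u)\xi=0$ for $1\le i<j\le\kappa$ and $t_{ii}(u)\xi=\lambda_i(u)\xi$ with $\lambda_i(u)\in1+u^{-1}\mathbb C[[u^{-1}]]$. Put $\rho_k=\sum_{a=k}^\kappa s_a$ for $1\le k\le\kappa$, and $\rho_{\kappa+1}=0$. *)

(* Defs.v *)
From HB Require Import structures.
From mathcomp Require Import all_boot all_order all_algebra complex.
From mathcomp Require Import Rstruct.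
Set Implicit Arguments.
Unset Strict Implicit.
Unset Printing Implicit Defensive.
Import Order.TTheory GRing.Theory Num.Theory.
Local Open Scope ring_scope.

Definition C : numClosedFieldType := (Rdefinitions.R)[i]%C.

(** * Formal power series in u^{-1}, given by their coefficient sequences:
    f : nat -> K  represents  sum_{r >= 0} f r * u^{-r}. *)
Section PowerSeries.
Variable K : fieldType.
Definition ps := nat -> K.

Definition ps_one : ps := fun n => (n == 0%N)%:R.

Definition ps_mul (f g : ps) : ps :=
  fun n => \sum_(k < n.+1) f k * g (n - k)%N.

(* inverse of a series with invertible constant term (fuel = n suffices) *)
Fixpoint ps_inv_aux (fuel : nat) (f : ps) (n : nat) : K :=
  match fuel with
  | 0 => (f 0%N)^-1
  | fu.+1 =>
      if n is 0 then (f 0%N)^-1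
      else - (f 0%N)^-1 * \sum_(k < n) f k.+1 * ps_inv_aux fu f (n - k.+1)%N
  end.
Definition ps_inv (f : ps) : ps := fun n => ps_inv_aux n f n.

(* the series f(u + a): (u+a)^{-r} = sum_{m>=0} binom(-r,m) a^m u^{-r-m},
   so the coefficient of u^{-n} is sum_{r<=n} f_r (-1)^{n-r} C(n-1,n-r) a^{n-r} *)
Definition ps_shift (a : K) (f : ps) : ps :=
  fun n => \sum_(r < n.+1)
      f r * ((-1) ^+ (n - r) * ('C(n.-1, n - r))%:R * a ^+ (n - r)).
End PowerSeries.

(** * Super Yangian data.
    kappa = m + n; the parity sequence is encoded by p : 'I_kappa -> bool,
    p i = |i|, s_i = (-1)^{|i|}.  Indices are 0-based: i : 'I_kappa stands
    for the paper's index i+1.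
    A representation is a K-vector space M together with the actions
    t r i j : M -> M of the generators t_{ij}^{(r+1)} (r >= 0). *)
Section SuperYangian.
Variable K : fieldType.
Variable kappa : nat.
Variable p : 'I_kappa -> bool.
Variable M : lmodType K.
Variable t : nat -> 'I_kappa -> 'I_kappa -> M -> M.

Definition sgn (b : bool) : K := (-1) ^+ b.

Definition tc (r : nat) (i j : 'I_kappa) (v : M) : M :=
  if r is r'.+1 then t r' i j v else (if i == j then v else 0).

Definition scomm (a : M -> M) (pa : bool) (b : M -> M) (pb : bool) (v : M) : M :=
  a (b v) - sgn (pa && pb) *: b (a v).

(* The defining relations
   [t_ij(u), t_kl(v)] = (-1)^{|i||j|+|i||k|+|j||k|}/(u-v) (t_kj(u)t_il(v) - t_kj(v)t_il(u)),
   written, after multiplying by (u - v), coefficientwise: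
   [t_ij^{(r+1)}, t_kl^{(s)}] - [t_ij^{(r)}, t_kl^{(s+1)}]
      = (-1)^{...} (t_kj^{(r)} t_il^{(s)} - t_kj^{(s)} t_il^{(r)}),  r, s >= 0. *)
Definition is_rep : Prop :=
  (forall r i j (a : K) (v w : M), t r i j (a *: v + w) = a *: t r i j v + t r i j w)
  /\ (forall (r s : nat) (i j k l : 'I_kappa) (v : M),
        scomm (tc r.+1 i j) (p i (+) p j) (tc s k l) (p k (+) p l) v
        - scomm (tc r i j) (p i (+) p j) (tc s.+1 k l) (p k (+) p l) v
        = sgn ((p i && p j) (+) (p i && p k) (+) (p j && p k))
            *: (tc r k j (tc s i l v) - tc s k j (tc r i l v))).

(* T(u) = sum_{ij} (-1)^{|i||j|+|j|} t_ij(u) (x) E_ij ; the matrix entry of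
   T(u) at (i,j) is A_ij(u) = sigma i j * t_ij(u). *)
Definition sigma (i j : 'I_kappa) : K := sgn ((p i && p j) (+) p j).

(* Sign in the (super) tensor product Y (x) End(V):
   (a (x) E_ij)(b (x) E_jl) = (-1)^{|b| (|i|+|j|)} ab (x) E_il, with |b| = |j|+|l|. *)
Definition eps (i j l : 'I_kappa) : K := sgn ((p j (+) p l) && (p i (+) p j)).

(* Coefficients B^{(r)} of the matrix of T(u)^{-1} (acting on M), determined
   by T(u) T(u)^{-1} = 1, i.e. B^{(0)} = 1 and for r >= 1
   sum_{s=0}^{r} sum_j eps i j l A^{(s)}_ij B^{(r-s)}_jl = 0. *)
Fixpoint Binv_aux (fuel r : nat) (i l : 'I_kappa) (v : M) : M :=
  match fuel with
  | 0 => if i == l then v else 0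
  | f.+1 =>
      if r is 0 then (if i == l then v else 0)
      else - \sum_(s < r) \sum_(j < kappa)
               eps i j l *: (sigma i j *: tc s.+1 i j (Binv_aux f (r - s.+1) j l v))
  end.
Definition Binv (r : nat) (i l : 'I_kappa) (v : M) : M := Binv_aux r r i l v.

(* T(u)^{-1} = sum_{ij} (-1)^{|i||j|+|j|} t'_ij(u) (x) E_ij :
   tprime r i j is the action of the coefficient t'_ij^{(r)} (r >= 0). *)
Definition tprime (r : nat) (i j : 'I_kappa) (v : M) : M := sigma i j *: Binv r i j v.

(* highest l_s-weight vector of highest l_s-weight lam; lam i is the
   coefficient sequence of lambda_i(u) in 1 + u^{-1} K[[u^{-1}]] *)
Definition is_highest_weight (xi : M) (lam : 'I_kappa -> ps K) : Prop :=
  [/\ xi != 0,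
      forall i, lam i 0%N = 1,
      forall r (i j : 'I_kappa), (i < j)%N -> t r i j xi = 0
    & forall r (i : 'I_kappa), t r i i xi = lam i r.+1 *: xi].
End SuperYangian.

(* rho k (0-based) = sum_{a >= k} s_a; this is the paper's rho_{k+1};
   rho kappa = 0 *)
Definition rho (K : fieldType) (kappa : nat) (p : 'I_kappa -> bool) (k : nat) : K :=
  \sum_(a < kappa | (k <= a)%N) sgn K (p a).

Definition lam_prime (K : fieldType) (kappa : nat) (p : 'I_kappa -> bool)
    (lam : 'I_kappa -> ps K) (i : 'I_kappa) : ps K :=
  ps_mul (ps_inv (ps_shift (@rho K kappa p i.+1) (lam i)))
    (foldr (@ps_mul K) (ps_one K)
       (map (fun k : 'I_kappa => ps_mul (ps_shift (@rho K kappa p k) (lam k))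
                                  (ps_inv (ps_shift (@rho K kappa p k.+1) (lam k))))
            (filter (fun k : 'I_kappa => (i < k)%N) (enum 'I_kappa)))).

(* Main.v *)
Require Import Defs.
From HB Require Import structures.
From mathcomp Require Import all_boot all_order all_algebra complex.
From mathcomp Require Import Rstruct.
From mathcomp Require Import zify ring.
From Stdlib Require Import FunctionalExtensionality.
Set Implicit Arguments.
Unset Strict Implicit.
Unset Printing Implicit Defensive.
Import GRing.Theory.
Local Open Scope ring_scope.

Lemma sw4 (V : zmodType) (a b c d : V) : (a - b) - (c - d) = (a - c) - (b - d).
Proof. by rewrite !opprB !addrA (addrAC a (- b)) (addrAC a (- c)) (addrAC (a + d)). Qed.
Lemma subsub (V : zmodType) (g x y : V) : (g - x) - (g - y) = y - x.
Proof. by rewrite opprB addrC addrA subrK. Qed.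
Lemma e1 (V : zmodType) (xi xf wi vf : V) : (xi - xf) - ((vf - xf) - (wi - xi)) = wi - vf.
Proof. by rewrite [X in _ - X]sw4 opprB addrA [X in X - _]addrA subrK subrr sub0r opprB. Qed.
Lemma subKr' (V : zmodType) (x y : V) : x - (x - y) = y.
Proof. by rewrite opprB addrC subrK. Qed.

Section Lin.
Variables (K : fieldType) (M : lmodType K).
Definition lin (f : M -> M) := forall (a : K) (v w : M), f (a *: v + w) = a *: f v + f w.

Lemma lin0 f : lin f -> f 0 = 0.
Proof.
move=> hf; have h := hf 1 0 0; rewrite !scale1r !addr0 in h.
have h2 := congr1 (fun x => x - f 0) h. simpl in h2.
rewrite addrK subrr in h2. exact: esym h2.
Qed.
Lemma linD f : lin f -> forall v w, f (v + w) = f v + f w.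
Proof. by move=> hf v w; have := hf 1 v w; rewrite !scale1r. Qed.
Lemma linZ f : lin f -> forall a v, f (a *: v) = a *: f v.
Proof. by move=> hf a v; rewrite -[a *: v]addr0 hf (lin0 hf) addr0. Qed.
Lemma linN f : lin f -> forall v, f (- v) = - f v.
Proof. by move=> hf v; rewrite -scaleN1r linZ // scaleN1r. Qed.
Lemma linB f : lin f -> forall v w, f (v - w) = f v - f w.
Proof. by move=> hf v w; rewrite linD // linN. Qed.
Lemma lin_sum f : lin f -> forall (I : Type) (r : seq I) (P : pred I) (F : I -> M),
  f (\sum_(i <- r | P i) F i) = \sum_(i <- r | P i) f (F i).
Proof. by move=> hf I r P F; apply: (big_morph f (linD hf) (lin0 hf)). Qed.
End Lin.

Section Conv.
Variable (V : nmodType).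
Lemma tri_sum (n : nat) (A : nat -> nat -> V) :
  \sum_(m < n.+1) \sum_(s < (n - m)%N.+1) A m s =
  \sum_(k < n.+1) \sum_(m < k.+1) A m (k - m)%N.
Proof.
elim: n => [|n IH]; first by rewrite !big_ord_recl !big_ord0.
rewrite big_ord_recr [RHS]big_ord_recr /= -IH subnn big_ord1.
rewrite [X in _ = _ + X]big_ord_recr /= subnn.
rewrite (eq_bigr (fun i : 'I_n.+1 => \sum_(s < (n - i)%N.+1) A i s + A i (n - i)%N.+1)); last first.
  move=> i _; rewrite subSn; last by rewrite -ltnS.
  by rewrite big_ord_recr.
rewrite big_split /= -!addrA; congr (_ + _); congr (_ + _).
by apply: eq_bigr => i _; rewrite subSn // -ltnS.
Qed.
Lemma conv3 n (H : nat -> nat -> nat -> V) :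
  \sum_(m < n.+1) \sum_(s < (n - m)%N.+1) H m s (n - m - s)%N =
  \sum_(k < n.+1) \sum_(m < k.+1) H m (k - m)%N (n - k)%N.
Proof.
rewrite (tri_sum n (fun m s => H m s (n - m - s)%N)); apply: eq_bigr => k _; apply: eq_bigr => m _.
have hk := ltn_ord k; have hm := ltn_ord m.
by congr (H _ _ _); lia.
Qed.
Lemma conv_rev m (G : nat -> nat -> V) :
  \sum_(k < m.+1) G k (m - k)%N = \sum_(k < m.+1) G (m - k)%N k.
Proof.
rewrite (reindex_inj rev_ord_inj) /=; apply: eq_bigr => k _.
by rewrite subSS subKn // -ltnS.
Qed.
Lemma tri_swap N (H : nat -> nat -> V) :
  \sum_(k < N.+1) \sum_(s < (N - k)%N.+1) H k s = \sum_(s < N.+1) \sum_(k < (N - s)%N.+1) H k s.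
Proof.
rewrite (tri_sum N H) (tri_sum N (fun s k => H k s)); apply: eq_bigr => m _.
exact: (conv_rev m H).
Qed.
End Conv.

Lemma bump0 k : bump 0 k = k.+1.
Proof. by rewrite /bump leq0n. Qed.

Lemma hockey r d : (\sum_(j < d.+1) 'C((r + j).-1, j) = 'C(r + d, d))%N.
Proof.
elim: d => [|d IH]; first by rewrite big_ord1 !bin0.
by rewrite big_ord_recr /= IH !addnS binS addnC.
Qed.

Section PS.
Variable K : fieldType.
Implicit Types f g h : ps K.

Lemma ps_mulC f g : ps_mul f g = ps_mul g f.
Proof.
apply: functional_extensionality => n; rewrite /ps_mul.
rewrite (conv_rev n (fun a b => f a * g b)); apply: eq_bigr => k _; exact: mulrC.
Qed.

Lemma ps_mulA f g h : ps_mul f (ps_mul g h) = ps_mul (ps_mul f g) h.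
Proof.
apply: functional_extensionality => n; rewrite /ps_mul.
rewrite (eq_bigr (fun k : 'I_n.+1 => \sum_(j < (n - k)%N.+1) f k * (g j * h (n - k - j)%N))); last first.
  by move=> k _; rewrite mulr_sumr.
rewrite (conv3 n (fun a b c => f a * (g b * h c))).
apply: eq_bigr => k _; rewrite mulr_suml; apply: eq_bigr => j _; exact: mulrA.
Qed.

Lemma ps_mul1 f : ps_mul f (ps_one K) = f.
Proof.
apply: functional_extensionality => n; rewrite /ps_mul big_ord_recr /= subnn /ps_one eqxx mulr1.
rewrite big1 ?add0r // => k _.
have : (n - k)%N != 0%N by rewrite subn_eq0 -ltnNge ltn_ord.
by move/negbTE => ->; rewrite mulr0.
Qed.

Lemma ps_inv_fuel fu f n : (n <= fu)%N -> ps_inv_aux fu f n = ps_inv f n.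
Proof.
rewrite /ps_inv.
suff H : forall fu fu' n, (n <= fu)%N -> (n <= fu')%N -> ps_inv_aux fu f n = ps_inv_aux fu' f n.
  by move=> h; apply: H.
clear fu n; elim=> [|fu IH] [|fu'] [|n] h h' //=.
congr (_ * _); apply: eq_bigr => k _; have hk := ltn_ord k; rewrite (IH fu') //.
all: by rewrite subSS; apply: leq_trans (leq_subr _ _) _.
Qed.

Lemma ps_mulV f : f 0%N != 0 -> ps_mul f (ps_inv f) = ps_one K.
Proof.
move=> h0; apply: functional_extensionality => n; rewrite /ps_mul /ps_one.
case: n => [|n].
  by rewrite big_ord1 /ps_inv /= mulfV.
rewrite big_ord_recl /= subn0 /ps_inv /= mulrA mulrN mulfV // mulN1r.
rewrite addrC; apply/eqP; rewrite subr_eq0; apply/eqP.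
apply: eq_bigr => k _; rewrite ?lift0 ?bump0 ?subSS.
by rewrite [in RHS]ps_inv_fuel ?leq_subr.
Qed.

Lemma ps_shift0 f : ps_shift 0 f = f.
Proof.
apply: functional_extensionality => n; rewrite /ps_shift big_ord_recr /= subnn expr0 mul1r.
rewrite bin0 mulr1n expr0 !mulr1 big1 ?add0r // => k _.
have : (n - k)%N != 0%N by rewrite subn_eq0 -ltnNge ltn_ord.
by move/negbTE => h; rewrite expr0n h /= mulr0n !mulr0.
Qed.

Lemma ps_shift_0 a f : ps_shift a f 0%N = f 0%N.
Proof. by rewrite /ps_shift big_ord1 /= expr0 mul1r bin0 mulr1n !mulr1. Qed.
End PS.

Section Subst.
Variables (K : fieldType) (M : lmodType K) (c : K).
Definition gam (k r : nat) : K := (- c) ^+ (k - r) * ('C(k.-1, k - r))%:R.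
Definition subF (F : nat -> nat -> M) N :=
  \sum_(s < N.+1) \sum_(r < (N - s)%N.+1) gam (N - s) r *: F r s.
Definition xsh (F : nat -> nat -> M) r n := if r is r'.+1 then F r' n else 0.
Definition ysh (F : nat -> nat -> M) r n := if n is n'.+1 then F r n' else 0.
Definition ysc (w : nat -> M) N := if N is N'.+1 then w N' else 0.
Definition phi k : K := if k is k'.+1 then (- c) ^+ k' else 0.
Definition cv (a : nat -> K) (w : nat -> M) N := \sum_(k < N.+1) a k *: w (N - k)%N.

Lemma ps_shift_gam f n : ps_shift c f n = \sum_(r < n.+1) f r * gam n r.
Proof.
apply: eq_bigr => r _; congr (_ * _); rewrite /gam [(- c) ^+ _]exprNn -!mulrA; congr (_ * _).
exact: mulrC.
Qed.

Lemma subF_ysh F N : subF (ysh F) N = ysc (subF F) N.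
Proof.
rewrite /subF; case: N => [|N] /=.
  by rewrite big_ord1 big1 // => r _; rewrite scaler0.
rewrite big_ord_recl /= big1 ?add0r; last by move=> r _; rewrite scaler0.
by apply: eq_bigr => s _; rewrite ?lift0 subSS.
Qed.

Lemma gam_phi M' r : (r < M')%N ->
  \sum_(k < (M' - r)%N.+1) phi k * gam (M' - k) r = gam M' r.+1.
Proof.
move=> hr; rewrite big_ord_recl /= mul0r add0r.
set d := (M' - r.+1)%N.
have hM : M' = (r + d).+1 by rewrite /d; lia.
have -> : (M' - r)%N = d.+1 by rewrite hM; lia.
rewrite (eq_bigr (fun k : 'I_d.+1 => (- c) ^+ d * ('C((r + (d - k)).-1, d - k))%:R)); last first.
  move=> k _; rewrite ?lift0 ?bump0 /phi /gam mulrA -exprD.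
  have hk := ltn_ord k.
  congr (_ ^+ _ * ('C(_, _))%:R); rewrite hM; lia.
rewrite -mulr_sumr.
rewrite (conv_rev d (fun k j => ('C((r + j).-1, j))%:R : K)).
rewrite -natr_sum hockey /gam hM.
congr (_ ^+ _ * ('C(_, _))%:R); lia.
Qed.

Lemma subF_xsh F N : subF (xsh F) N = cv phi (subF F) N.
Proof.
rewrite /subF /cv.
transitivity (\sum_(s < N.+1) \sum_(r < (N - s)%N) gam (N - s) r.+1 *: F r s).
  apply: eq_bigr => s _; rewrite big_ord_recl /= scaler0 add0r.
  by apply: eq_bigr => r _; rewrite ?lift0 ?bump0.
transitivity (\sum_(k < N.+1) \sum_(s < (N - k)%N.+1) \sum_(r < (N - s - k)%N.+1)
    (phi k * gam (N - s - k) r) *: F r s); last first.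
  apply: eq_bigr => k _; rewrite scaler_sumr; apply: eq_bigr => s _.
  rewrite scaler_sumr subnAC; apply: eq_bigr => r _; by rewrite scalerA.
rewrite (tri_swap N (fun k s => \sum_(r < (N - s - k)%N.+1) (phi k * gam (N - s - k) r) *: F r s)).
apply: eq_bigr => s _.
rewrite (tri_swap (N - s) (fun k r => (phi k * gam (N - s - k) r) *: F r s)).
rewrite big_ord_recr /= subnn big_ord1 /= mul0r scale0r addr0.
apply: eq_bigr => r _; rewrite -scaler_suml gam_phi //.
Qed.

Lemma C1 (w : nat -> M) N : ysc w N - cv phi w N = c *: cv phi (ysc w) N.
Proof.
rewrite /cv; case: N => [|N].
  by rewrite /= !big_ord1 /= !scale0r subr0 scaler0.
rewrite [X in _ - X]big_ord_recl [X in c *: X]big_ord_recl /= !scale0r !add0r.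
rewrite big_ord_recl /= expr0 scale1r ?lift0 ?bump0 subSS subn0.
rewrite opprD addrA subrr add0r.
rewrite [X in _ = c *: X]big_ord_recr /= subnn /= scaler0 addr0.
rewrite -sumrN scaler_sumr; apply: eq_bigr => k _.
rewrite ?lift0 ?bump0 !subSS /=.
have -> : (N - k)%N = (N - k.+1)%N.+1 by have := ltn_ord k; lia.
by rewrite /= scalerA exprS mulNr scaleNr opprK.
Qed.

Lemma C2 (w : nat -> M) : (forall N, cv phi (ysc w) N = 0) -> forall n, w n = 0.
Proof.
move=> H; elim/ltn_ind => n IH.
have := H n.+2; rewrite /cv big_ord_recl /= scale0r add0r big_ord_recl /= expr0 scale1r.
rewrite [X in _ + X = _ -> _]big1 ?addr0 //.
move=> k _; rewrite ?lift0 ?bump0 !subSS /=.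
case e : (n - k)%N => [|m] /=; first by rewrite scaler0.
by rewrite IH ?scaler0 //; lia.
Qed.

Lemma subFB (F G : nat -> nat -> M) N :
  subF (fun r n => F r n - G r n) N = subF F N - subF G N.
Proof.
rewrite /subF -sumrB; apply: eq_bigr => s _; rewrite -sumrB; apply: eq_bigr => r _.
by rewrite scalerBr.
Qed.
Lemma subFZ a (F : nat -> nat -> M) N : subF (fun r n => a *: F r n) N = a *: subF F N.
Proof.
rewrite /subF scaler_sumr; apply: eq_bigr => s _; rewrite scaler_sumr; apply: eq_bigr => r _.
by rewrite !scalerA mulrC.
Qed.
Lemma subF_ext (F G : nat -> nat -> M) N : (forall r n, F r n = G r n) -> subF F N = subF G N.
Proof. by move=> h; apply: eq_bigr => s _; apply: eq_bigr => r _; rewrite h. Qed.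
Lemma cv_ext a (w1 w2 : nat -> M) N : (forall n, w1 n = w2 n) -> cv a w1 N = cv a w2 N.
Proof. by move=> h; apply: eq_bigr => k _; rewrite h. Qed.
Lemma cvB a (w1 w2 : nat -> M) N : cv a (fun n => w1 n - w2 n) N = cv a w1 N - cv a w2 N.
Proof. by rewrite /cv -sumrB; apply: eq_bigr => k _; rewrite scalerBr. Qed.
Lemma yscB (w1 w2 : nat -> M) N : ysc (fun n => w1 n - w2 n) N = ysc w1 N - ysc w2 N.
Proof. by case: N => [|N] /=; rewrite ?subrr. Qed.

Theorem subst_main (D E : nat -> nat -> M) :
  (forall r n, (D r.+1 n - E r.+1 n) - (D r n.+1 - E r n.+1) = c *: D r n) ->
  (forall m, D 0%N m = E 0%N m) -> (forall m, D m 0%N = E m 0%N) -> c != 0 ->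
  forall N, subF E N = 0.
Proof.
move=> hrec h0m hm0 hc.
pose Dl r n := D r n - E r n.
have key : forall r n, ysh Dl r n - xsh Dl r n = c *: xsh (ysh D) r n.
  case=> [|r] [|n] /=; rewrite ?subrr ?scaler0 //.
  - by rewrite /Dl h0m subrr subr0.
  - by rewrite /Dl hm0 subrr subrr.
  - exact: hrec.
have H1 : forall N, ysc (subF Dl) N - cv phi (subF Dl) N = c *: cv phi (ysc (subF D)) N.
  move=> N; rewrite -subF_ysh -subF_xsh -subFB.
  rewrite (@cv_ext _ (ysc (subF D)) (subF (ysh D))); last by move=> n; rewrite subF_ysh.
  by rewrite -subF_xsh -subFZ; apply: subF_ext.
have H2 : forall N, cv phi (ysc (fun n => subF Dl n - subF D n)) N = 0.
  move=> N; have := H1 N; rewrite C1 => /eqP; rewrite -subr_eq0 -scalerBr scaler_eq0 (negbTE hc) /=.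
  rewrite (@cv_ext _ (ysc (fun n => subF Dl n - subF D n)) (fun n => ysc (subF Dl) n - ysc (subF D) n)).
    by rewrite cvB => /eqP.
  by move=> n; rewrite yscB.
have H3 := C2 H2.
move=> N; rewrite (subF_ext (G := fun r n => D r n - Dl r n)); last by move=> r n; rewrite /Dl subKr'.
by rewrite subFB; apply/eqP; rewrite subr_eq0 eq_sym -subr_eq0 H3.
Qed.

Theorem subst_zero (D E : nat -> nat -> M) : c = 0 ->
  (forall r n, (D r.+1 n - E r.+1 n) - (D r n.+1 - E r n.+1) = c *: D r n) ->
  (forall m, D 0%N m = E 0%N m) ->
  (forall N, \sum_(r < N.+1) D r (N - r)%N = 0) -> forall N, subF E N = 0.
Proof.
move=> c0 hrec h0m hdiag.
have DE : forall r n, D r n = E r n.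
  elim=> [|r IH] n; first exact: h0m.
  have := hrec r n; rewrite c0 scale0r -(IH n.+1) subrr subr0 => /eqP.
  by rewrite subr_eq0 => /eqP.
move=> N; rewrite -(hdiag N) -(conv_rev N (fun a b => D b a)) /subF.
apply: eq_bigr => s _.
rewrite big_ord_recr /= big1 ?add0r.
  by rewrite /gam subnn expr0 bin0 mul1r scale1r DE.
move=> r _; rewrite /gam c0 oppr0 expr0n.
have : (N - s - r)%N != 0%N by have := ltn_ord r; lia.
by move/negbTE => -> ; rewrite mul0r scale0r.
Qed.
End Subst.


Section Uniq.
Variables (K : fieldType) (M : lmodType K).
Lemma uniq_sol (A : nat -> M -> M) (a b : ps K) (g : nat -> M) (x : M) :
  (forall m, lin (A m)) -> (forall v, A 0%N v = v) -> (forall m, A m x = a m *: x) -> a 0%N = 1 ->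
  (forall N, \sum_(s < N.+1) A (N - s)%N (g s) = b N *: x) ->
  forall n, g n = ps_mul (ps_inv a) b n *: x.
Proof.
move=> hl hA0 hAx ha0 hg.
set mu := ps_mul (ps_inv a) b.
have hab : ps_mul a mu = b.
  rewrite /mu ps_mulA ps_mulV ?ha0 ?oner_eq0 //.
  by rewrite ps_mulC ps_mul1.
have hmu : forall N, \sum_(s < N.+1) A (N - s)%N (mu s *: x) = b N *: x.
  move=> N; rewrite (eq_bigr (fun s : 'I_N.+1 => (mu s * a (N - s)%N) *: x)); last first.
    by move=> s _; rewrite (linZ (hl _)) hAx scalerA.
  rewrite -scaler_suml; congr (_ *: _).
  rewrite -hab /ps_mul (conv_rev N (fun u w => a u * mu w)); apply: eq_bigr => k _; exact: mulrC.
pose h n := g n - mu n *: x.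
have hh : forall N, \sum_(s < N.+1) A (N - s)%N (h s) = 0.
  move=> N; rewrite /h; under eq_bigr do rewrite (linB (hl _)).
  by rewrite sumrB hg hmu subrr.
suff H : forall n, h n = 0 by move=> n; apply/eqP; rewrite -subr_eq0; apply/eqP; exact: H.
elim/ltn_ind => n IH; have := hh n; rewrite big_ord_recr /= subnn hA0 big1 ?add0r //.
by move=> s _; rewrite IH ?(lin0 (hl _)).
Qed.
End Uniq.

Section LP.
Variables (K : fieldType) (kappa : nat) (p : 'I_kappa -> bool) (lam : 'I_kappa -> ps K).

Lemma filter_gt (i : nat) : (i < kappa)%N ->
  map val (filter (fun k : 'I_kappa => (i < k)%N) (enum 'I_kappa)) = iota i.+1 (kappa - i.+1).
Proof.
move=> hi.
have -> : filter (fun k : 'I_kappa => (i < k)%N) (enum 'I_kappa) =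
          filter (preim val (fun x => (i < x)%N)) (enum 'I_kappa) by [].
rewrite -filter_map val_enum_ord.
rewrite -{1}(subnKC hi) iotaD filter_cat add0n.
rewrite (eq_in_filter (a2 := pred0)); last by move=> x; rewrite mem_iota add0n ltnS => /andP [_ h] /=; rewrite ltnNge h.
rewrite filter_pred0 /=.
by apply/all_filterP/allP => x; rewrite mem_iota => /andP [].
Qed.

Lemma lam_prime_step (i f : 'I_kappa) : val f = (val i).+1 ->
  lam_prime p lam i = ps_mul (ps_inv (ps_shift (rho K p i.+1) (lam i)))
    (ps_mul (ps_shift (rho K p i.+1) (lam f)) (lam_prime p lam f)).
Proof.
move=> hf; rewrite /lam_prime.
have -> : filter (fun k : 'I_kappa => (i < k)%N) (enum 'I_kappa) =
          f :: filter (fun k : 'I_kappa => (f < k)%N) (enum 'I_kappa).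
  apply: (inj_map val_inj) => /=; rewrite filter_gt ?ltn_ord // filter_gt ?ltn_ord //.
  have hf' : nat_of_ord f = (nat_of_ord i).+1 := hf.
  have hfk := ltn_ord f; rewrite hf'.
  have -> : (kappa - i.+1 = (kappa - i.+2).+1)%N by lia.
  by [].
rewrite /= hf.
by rewrite !ps_mulA.
Qed.

Lemma lam_prime_last (i : 'I_kappa) : (val i).+1 = kappa ->
  lam_prime p lam i = ps_inv (lam i).
Proof.
move=> hi; rewrite /lam_prime.
have -> : filter (fun k : 'I_kappa => (i < k)%N) (enum 'I_kappa) = [::].
  apply: (inj_map val_inj); rewrite /= filter_gt ?ltn_ord // hi subnn //.
have -> : rho K p i.+1 = 0.
  by rewrite /rho big_pred0 // => a; rewrite hi leqNgt ltn_ord.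
by rewrite /= ps_shift0 ps_mul1.
Qed.
End LP.

Section Yang.
Variables (K : fieldType) (kappa : nat) (p : 'I_kappa -> bool) (M : lmodType K)
  (t : nat -> 'I_kappa -> 'I_kappa -> M -> M).
Hypothesis ht : is_rep p t.
Local Notation T := (tc t).
Local Notation tp := (tprime p t).
Local Notation sg := (sgn K).

Lemma T_lin r i j : lin (T r i j).
Proof.
case: r => [|r] a v w /=; last exact: ht.1.
by case: eqP => _ //; rewrite scaler0 addr0.
Qed.

Lemma sg_mul a b : sg a * sg b = sg (a (+) b).
Proof. by case: a; case: b; rewrite /sgn /= ?expr0 ?expr1 ?mulN1r ?opprK ?mul1r. Qed.
Lemma sgK a : sg a * sg a = 1.
Proof. by rewrite sg_mul addbb. Qed.
Lemma sg_neq0 a : sg a != 0.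
Proof. by case: a; rewrite /sgn /= ?expr0 ?expr1 ?oppr_eq0 oner_eq0. Qed.

Lemma eps_sigma i j l : eps K p i j l = sigma K p i j * sigma K p j l * sigma K p i l.
Proof.
rewrite /eps /sigma !sg_mul; congr sg.
by case: (p i); case: (p j); case: (p l).
Qed.

Lemma sigma_ii i : sigma K p i i = 1.
Proof. by rewrite /sigma andbb addbb /sgn expr0. Qed.

Lemma Binv_aux_lin f r i l : lin (Binv_aux p t f r i l).
Proof.
elim: f r i l => [|f IH] r i l a v w /=.
  by case: eqP => _ //; rewrite scaler0 addr0.
case: r => [|r]; first by case: eqP => _ //; rewrite scaler0 addr0.
rewrite scalerN -opprD; congr (- _).
rewrite scaler_sumr -big_split /=; apply: eq_bigr => s _.
rewrite scaler_sumr -big_split /=; apply: eq_bigr => j _.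
by rewrite IH (proj1 ht) !scalerDr !scalerA; congr (_ + _); rewrite mulrC mulrA (mulrC a).
Qed.

Lemma Binv_fuel f r i l v : (r <= f)%N -> Binv_aux p t f r i l v = Binv p t r i l v.
Proof.
rewrite /Binv.
suff H : forall f f' r i l, (r <= f)%N -> (r <= f')%N -> Binv_aux p t f r i l v = Binv_aux p t f' r i l v.
  by move=> hr; apply: H.
clear f r i l; elim=> [|f IH] [|f'] [|r] i l hf hf' //=.
congr (- _); apply: eq_bigr => s _; apply: eq_bigr => j _.
rewrite (IH f') // ?subSS; apply: leq_trans (leq_subr _ _) _; by [].
Qed.

Lemma t_lin r i j : lin (t r i j).
Proof. exact: (proj1 ht r i j). Qed.

Lemma tp_lin n i l : lin (tp n i l).
Proof.
move=> a v w; rewrite /tprime /Binv Binv_aux_lin scalerDr !scalerA; congr (_ + _).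
by rewrite mulrC.
Qed.

Lemma sigma_eps i j l : sigma K p i l * (eps K p i j l * sigma K p i j) = sigma K p j l.
Proof.
rewrite /eps /sigma !sg_mul; congr sg.
by case: (p i); case: (p j); case: (p l).
Qed.

Lemma tp_rec r i l v : tp r.+1 i l v =
  - \sum_(s < r.+1) \sum_(j < kappa) T s.+1 i j (tp (r - s)%N j l v).
Proof.
rewrite {1}/tprime /Binv /= scalerN scaler_sumr; congr (- _).
apply: eq_bigr => s _; rewrite scaler_sumr; apply: eq_bigr => j _.
rewrite subSS Binv_fuel ?leq_subr // /tprime (linZ (t_lin s i j)) !scalerA.
by rewrite sigma_eps.
Qed.

Lemma T0v r i j : T r i j 0 = 0.
Proof. exact: lin0 (T_lin r i j). Qed.
Lemma tp0v r i j : tp r i j 0 = 0.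
Proof. exact: lin0 (tp_lin r i j). Qed.

Lemma sum_delta (F : 'I_kappa -> M) i :
  \sum_(j < kappa) (if i == j then F j else 0) = F i.
Proof.
rewrite (bigD1 i) //= eqxx big1 ?addr0 // => j hj.
by rewrite eq_sym (negbTE hj).
Qed.
Lemma sum_delta' (F : 'I_kappa -> M) i :
  \sum_(j < kappa) (if j == i then F j else 0) = F i.
Proof.
rewrite (bigD1 i) //= eqxx big1 ?addr0 // => j hj.
by rewrite (negbTE hj).
Qed.

Lemma RI n i l v : \sum_(s < n.+1) \sum_(j < kappa) T s i j (tp (n - s)%N j l v) =
  if (n == 0%N) && (i == l) then v else 0.
Proof.
rewrite big_ord_recl /= subn0 sum_delta.
case: n => [|n].
  rewrite big_ord0 addr0 /tprime /Binv /=.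
  by case: eqP => [->|_]; rewrite ?sigma_ii ?scale1r ?scaler0.
rewrite tp_rec /= addrC; apply/eqP; rewrite subr_eq0; apply/eqP.
apply: eq_bigr => s _; apply: eq_bigr => j _.
by rewrite ?lift0 ?subSS.
Qed.

Lemma LI n a l v : \sum_(s < n.+1) \sum_(k < kappa) tp s a k (T (n - s)%N k l v) =
  if (n == 0%N) && (a == l) then v else 0.
Proof.
pose E n a := \sum_(s < n.+1) \sum_(k < kappa) tp s a k (T (n - s)%N k l v) -
  if (n == 0%N) && (a == l) then v else 0.
suff : E n a = 0 by move/eqP; rewrite subr_eq0 => /eqP.
have key : forall n i, \sum_(m < n.+1) \sum_(b < kappa) T m i b (E (n - m)%N b) = 0.
  move=> N i.
  have -> : \sum_(m < N.+1) \sum_(b < kappa) T m i b (E (N - m)%N b) =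
    \sum_(m < N.+1) \sum_(s < (N - m).+1) \sum_(b < kappa) \sum_(k < kappa)
        T m i b (tp s b k (T (N - m - s)%N k l v)) -
    \sum_(m < N.+1) \sum_(b < kappa) T m i b (if ((N - m)%N == 0%N) && (b == l) then v else 0).
    rewrite -sumrB; apply: eq_bigr => m _.
    under eq_bigr do rewrite /E (linB (T_lin _ _ _)) (lin_sum (T_lin _ _ _)).
    rewrite sumrB; congr (_ - _).
    rewrite exchange_big /=; apply: eq_bigr => s _; apply: eq_bigr => b _.
    exact: (lin_sum (T_lin _ _ _)).
  rewrite (conv3 N (fun m s q => \sum_(b < kappa) \sum_(k < kappa) T m i b (tp s b k (T q k l v)))).
  apply/eqP; rewrite subr_eq0; apply/eqP.
  transitivity (T N i l v).
    rewrite (eq_bigr (fun k : 'I_N.+1 => if k == 0%N :> nat then T N i l v else 0)).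
      by rewrite big_ord_recl /= big1 ?addr0 // => k _; rewrite lift0.
    move=> k _.
    under eq_bigr do rewrite exchange_big /=.
    rewrite exchange_big /=.
    rewrite (eq_bigr (fun kk : 'I_kappa => if ((k == 0%N :> nat) && (i == kk)) then T (N - k)%N kk l v else 0)).
      case: eqP => [k0|_]; last by rewrite big1.
      by rewrite sum_delta k0 subn0.
    move=> kk _; exact: RI.
  rewrite big_ord_recr /= subnn big1 ?add0r; last first.
    move=> m _; rewrite big1 // => b _.
    have : (N - m)%N != 0%N by rewrite subn_eq0 -ltnNge ltn_ord.
    by move/negbTE => ->; rewrite T0v.
  rewrite (eq_bigr (fun b : 'I_kappa => if b == l then T N i b v else 0)) ?sum_delta' //.
  by move=> b _; case: (b == l); rewrite ?T0v.
elim/ltn_ind: n a => n IH a.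
have := key n a; rewrite big_ord_recl /= subn0.
rewrite (eq_bigr (fun b : 'I_kappa => if a == b then E n b else 0)); last by move=> b _.
rewrite sum_delta big1 ?addr0 // => m _.
rewrite big1 // => b _; rewrite IH ?T0v //.
  by have := T0v (0 + m).+1 a b.
rewrite /bump /=; have := ltn_ord m; lia.
Qed.

Lemma lin_if (f : M -> M) (c : bool) (x : M) : lin f -> f (if c then x else 0) = if c then f x else 0.
Proof. by move=> hf; case: c; rewrite ?(lin0 hf). Qed.

Lemma sgn_split (q k l : bool) : sg (q && (k (+) l)) = sg (q && k) * sg (q && l).
Proof. by rewrite sg_mul; congr sg; case: q; case: k; case: l. Qed.
Lemma sgn_theta (pi pj pk : bool) :
  sg ((pi (+) pj) && pk) * sg ((pi && pj) (+) (pi && pk) (+) (pj && pk)) = sg (pi && pj).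
Proof. by rewrite sg_mul; congr sg; case: pi; case: pj; case: pk. Qed.

Lemma Tsum r i j (I : Type) (s : seq I) (P : pred I) (G : I -> M) :
  T r i j (\sum_(x <- s | P x) G x) = \sum_(x <- s | P x) T r i j (G x).
Proof. exact: (lin_sum (T_lin r i j)). Qed.
Lemma tpsum r i j (I : Type) (s : seq I) (P : pred I) (G : I -> M) :
  tp r i j (\sum_(x <- s | P x) G x) = \sum_(x <- s | P x) tp r i j (G x).
Proof. exact: (lin_sum (tp_lin r i j)). Qed.
Lemma TZ r i j c w : T r i j (c *: w) = c *: T r i j w.
Proof. exact: (linZ (T_lin r i j)). Qed.
Lemma tpZ r i j c w : tp r i j (c *: w) = c *: tp r i j w.
Proof. exact: (linZ (tp_lin r i j)). Qed.
Lemma TB r i j w1 w2 : T r i j (w1 - w2) = T r i j w1 - T r i j w2.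
Proof. exact: (linB (T_lin r i j)). Qed.
Lemma tpB r i j w1 w2 : tp r i j (w1 - w2) = tp r i j w1 - tp r i j w2.
Proof. exact: (linB (tp_lin r i j)). Qed.
Lemma TD r i j w1 w2 : T r i j (w1 + w2) = T r i j w1 + T r i j w2.
Proof. exact: (linD (T_lin r i j)). Qed.
Lemma tpD r i j w1 w2 : tp r i j (w1 + w2) = tp r i j w1 + tp r i j w2.
Proof. exact: (linD (tp_lin r i j)). Qed.

Lemma LI_conv N a l (z : nat -> M) :
  \sum_(n1 < N.+1) \sum_(s < (N - n1)%N.+1) \sum_(k < kappa) tp n1 a k (T s k l (z (N - n1 - s)%N)) =
  if a == l then z N else 0.
Proof.
rewrite (conv3 N (fun n1 s q => \sum_(k < kappa) tp n1 a k (T s k l (z q)))).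
rewrite big_ord_recl /= [X in _ + X]big1 ?addr0; last first.
  by move=> m _; rewrite LI /bump leq0n add1n.
by rewrite subn0 (LI 0 a l (z N)).
Qed.

Lemma sg4 (x y z : bool) : sg x * sg y * sg y * sg z = sg x * sg z.
Proof. by rewrite -(mulrA (sg x)) sgK mulr1. Qed.

Section CR.
Variables (a b i j : 'I_kappa) (v : M).
Let pij := p i (+) p j.
Let F r s (k l : 'I_kappa) w := T r i j (T s k l w) - sg (pij && (p k (+) p l)) *: T s k l (T r i j w).
Let Psi r s (k l : 'I_kappa) w := sg ((p i && p j) (+) (p i && p k) (+) (p j && p k)) *:
   (T r k j (T s i l w) - T s k j (T r i l w)).
Lemma REL r s k l w : F r.+1 s k l w - F r s.+1 k l w = Psi r s k l w.
Proof. exact: (proj2 ht r s i j k l w). Qed.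
Lemma F0 r k l w : F r 0 k l w = 0.
Proof.
rewrite /F /=; case: eqP => [->|_]; last by rewrite T0v scaler0 subrr.
by rewrite addbb andbF /sgn expr0 scale1r subrr.
Qed.
Let Phi1 r N k := \sum_(l < kappa) \sum_(s < N.+1) F r s k l (tp (N - s)%N l b v).
Let Psi1 r N k := \sum_(l < kappa) \sum_(s < N.+1) Psi r s k l (tp (N - s)%N l b v).
Lemma Phi1_rec r N k : Phi1 r.+1 N k - Phi1 r N.+1 k = Psi1 r N k.
Proof.
rewrite /Phi1 /Psi1 -sumrB; apply: eq_bigr => l _.
rewrite [X in _ - X]big_ord_recl /= F0 add0r -sumrB; apply: eq_bigr => s _.
by rewrite ?lift0 subSS REL.
Qed.
Lemma Phi1_0 r k : Phi1 r 0 k = 0.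
Proof. by rewrite /Phi1 big1 // => l _; rewrite big_ord1 /= F0. Qed.
Let ck (k : 'I_kappa) := sg (pij && p a) * sg (pij && p k).
Let Phi2 r N := \sum_(k < kappa) \sum_(n1 < N.+1) ck k *: tp n1 a k (Phi1 r (N - n1)%N k).
Let Psi2 r N := \sum_(k < kappa) \sum_(n1 < N.+1) ck k *: tp n1 a k (Psi1 r (N - n1)%N k).
Lemma Phi2_rec r N : Phi2 r.+1 N - Phi2 r N.+1 = Psi2 r N.
Proof.
rewrite /Phi2 /Psi2 -sumrB; apply: eq_bigr => k _.
rewrite [X in _ - X]big_ord_recr /= subnn Phi1_0 tp0v scaler0 addr0 -sumrB.
apply: eq_bigr => n1 _.
rewrite -scalerBr -(linB (tp_lin _ _ _)) subSn; last by rewrite -ltnS.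
by rewrite Phi1_rec.
Qed.
Lemma Phi1_eq r N k : Phi1 r N k = T r i j (if (N == 0%N) && (k == b) then v else 0) -
  sg (pij && p k) *: \sum_(l < kappa) sg (pij && p l) *:
     \sum_(s < N.+1) T s k l (T r i j (tp (N - s)%N l b v)).
Proof.
rewrite /Phi1 /F.
under eq_bigr do rewrite sumrB.
rewrite sumrB; congr (_ - _).
  rewrite -(RI N k b v) Tsum exchange_big /=; apply: eq_bigr => s _; by rewrite Tsum.
rewrite scaler_sumr; apply: eq_bigr => l _; rewrite !scaler_sumr; apply: eq_bigr => s _.
by rewrite scalerA sgn_split.
Qed.

Lemma Phi2_eq r N : Phi2 r N = ck b *: tp N a b (T r i j v) - T r i j (tp N a b v).
Proof.
rewrite /Phi2.
under eq_bigr do under eq_bigr do rewrite Phi1_eq tpB scalerBr.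
under eq_bigr do rewrite sumrB.
rewrite sumrB; congr (_ - _).
  rewrite (bigD1 b) //= [X in _ + X]big1 ?addr0.
    rewrite big_ord_recr /= subnn eqxx /= big1 ?add0r // => n1 _.
    have : (N - n1)%N != 0%N by rewrite subn_eq0 -ltnNge ltn_ord.
    by move/negbTE => ->; rewrite /= T0v tp0v scaler0.
  move=> k hk; rewrite big1 // => n1 _.
  by rewrite (negbTE hk) andbF T0v tp0v scaler0.
transitivity (sg (pij && p a) *: \sum_(l < kappa) sg (pij && p l) *:
  \sum_(n1 < N.+1) \sum_(s < (N - n1)%N.+1) \sum_(k < kappa)
     tp n1 a k (T s k l (T r i j (tp (N - n1 - s)%N l b v)))).
  transitivity (\sum_(l < kappa) \sum_(n1 < N.+1) \sum_(s < (N - n1)%N.+1) \sum_(k < kappa)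
     (sg (pij && p a) * sg (pij && p l)) *: tp n1 a k (T s k l (T r i j (tp (N - n1 - s)%N l b v)))).
    rewrite (eq_bigr (fun k : 'I_kappa => \sum_(n1 < N.+1) \sum_(l < kappa) \sum_(s < (N - n1)%N.+1)
       (sg (pij && p a) * sg (pij && p l)) *: tp n1 a k (T s k l (T r i j (tp (N - n1 - s)%N l b v))))); last first.
      move=> k _; apply: eq_bigr => n1 _.
      rewrite tpZ tpsum scalerA scaler_sumr; apply: eq_bigr => l _.
      rewrite tpZ tpsum scalerA scaler_sumr; apply: eq_bigr => s _.
      by rewrite /ck sg4.
    under eq_bigr do rewrite exchange_big /=.
    rewrite exchange_big /=; apply: eq_bigr => l _.
    rewrite exchange_big /=; apply: eq_bigr => n1 _.
    by rewrite exchange_big.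
  rewrite scaler_sumr; apply: eq_bigr => l _; rewrite scalerA.
  rewrite scaler_sumr; apply: eq_bigr => n1 _.
  rewrite scaler_sumr; apply: eq_bigr => s _.
  by rewrite scaler_sumr.
rewrite (eq_bigr (fun l : 'I_kappa => sg (pij && p l) *: (if a == l then T r i j (tp N l b v) else 0))); last first.
  by move=> l _; rewrite (LI_conv N a l (fun q => T r i j (tp q l b v))).
rewrite (eq_bigr (fun l : 'I_kappa => if a == l then sg (pij && p l) *: T r i j (tp N l b v) else 0)); last first.
  by move=> l _; case: (a == l); rewrite ?scaler0.
by rewrite sum_delta scalerA sgK scale1r.
Qed.
Lemma Psi1_eq r N k : Psi1 r N k =
  sg ((p i && p j) (+) (p i && p k) (+) (p j && p k)) *:
  (T r k j (if (N == 0%N) && (i == b) then v else 0) -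
   \sum_(s < N.+1) T s k j (\sum_(l < kappa) T r i l (tp (N - s)%N l b v))).
Proof.
rewrite /Psi1 /Psi.
under eq_bigr do rewrite -scaler_sumr.
rewrite -scaler_sumr; congr (_ *: _).
under eq_bigr do rewrite sumrB.
rewrite sumrB; congr (_ - _).
  rewrite -(RI N i b v) Tsum exchange_big /=; apply: eq_bigr => s _; by rewrite Tsum.
by rewrite exchange_big /=; apply: eq_bigr => s _; rewrite Tsum.
Qed.

Lemma Psi2_eq r N : Psi2 r N = (sg (pij && p a) * sg (p i && p j)) *:
  ((i == b)%:R *: \sum_(k < kappa) tp N a k (T r k j v) -
   (a == j)%:R *: \sum_(l < kappa) T r i l (tp N l b v)).
Proof.
rewrite /Psi2.
under eq_bigr do under eq_bigr do rewrite Psi1_eq tpZ scalerA tpB tpsum.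
have ckt : forall k : 'I_kappa, ck k * sg ((p i && p j) (+) (p i && p k) (+) (p j && p k)) =
    sg (pij && p a) * sg (p i && p j).
  by move=> k; rewrite /ck -mulrA sgn_theta.
under eq_bigr do under eq_bigr do rewrite ckt.
under eq_bigr do rewrite -scaler_sumr.
rewrite -scaler_sumr; congr (_ *: _).
under eq_bigr do rewrite sumrB.
rewrite sumrB; congr (_ - _).
  rewrite scaler_sumr; apply: eq_bigr => k _.
  rewrite big_ord_recr /= subnn big1 ?add0r; last first.
    move=> n1 _.
    have : (N - n1)%N != 0%N by rewrite subn_eq0 -ltnNge ltn_ord.
    by move/negbTE => ->; rewrite /= T0v tp0v.
  by case: (i == b); rewrite ?scale1r ?scale0r ?T0v ?tp0v.
have -> : (a == j)%:R *: \sum_(l < kappa) T r i l (tp N l b v) =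
    if a == j then \sum_(l < kappa) T r i l (tp N l b v) else 0.
  by case: (a == j); rewrite ?scale1r ?scale0r.
rewrite -(LI_conv N a j (fun q => \sum_(l < kappa) T r i l (tp q l b v))).
rewrite exchange_big /=; apply: eq_bigr => n1 _.
by rewrite exchange_big.
Qed.

Lemma CR0 r n :
  (sg ((p i (+) p j) && p a) * sg ((p i (+) p j) && p b)) *: tp n a b (T r.+1 i j v) - T r.+1 i j (tp n a b v)
  - ((sg ((p i (+) p j) && p a) * sg ((p i (+) p j) && p b)) *: tp n.+1 a b (T r i j v) - T r i j (tp n.+1 a b v))
  = (sg ((p i (+) p j) && p a) * sg (p i && p j)) *:
  ((i == b)%:R *: \sum_(k < kappa) tp n a k (T r k j v) -
   (a == j)%:R *: \sum_(l < kappa) T r i l (tp n l b v)).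
Proof.
have := Phi2_rec r n; rewrite !Phi2_eq Psi2_eq; exact.
Qed.
End CR.

Section HW.
Variables (xi : M) (lam : 'I_kappa -> ps K).
Hypothesis hxi : is_highest_weight t xi lam.

Lemma Tup r (a b : 'I_kappa) : (a < b)%N -> T r a b xi = 0.
Proof.
move=> hab; case: r => [|r] /=.
  by case: eqP => // e; move: hab; rewrite e ltnn.
by case: hxi => _ _ h _; apply: h.
Qed.
Lemma Tdiag r (a : 'I_kappa) : T r a a xi = lam a r *: xi.
Proof.
case: r => [|r] /=; last by case: hxi => _ _ _ h; apply: h.
by case: hxi => _ h _ _; rewrite h eqxx scale1r.
Qed.
Lemma T0off (m b : 'I_kappa) w : m != b -> T 0 m b w = 0.
Proof. by move=> h /=; rewrite (negbTE h). Qed.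

Let Q n r (a b : 'I_kappa) := \sum_(m < kappa) tp n a m (T r m b xi).

Lemma Q0 n (a b : 'I_kappa) : Q n 0 a b = tp n a b xi.
Proof.
rewrite /Q (eq_bigr (fun m : 'I_kappa => if m == b then tp n a m xi else 0)) ?sum_delta' //.
by move=> m _ /=; case: (m == b); rewrite ?tp0v.
Qed.

Lemma FA_all N : (forall a b : 'I_kappa, (a < b)%N -> tp N a b xi = 0) /\
  (forall (a b : 'I_kappa) n r, (a < b)%N -> (n + r)%N = N -> Q n r a b = 0).
Proof.
elim/ltn_ind: N => N IH.
have IHA : forall n, (n < N)%N -> forall a b : 'I_kappa, (a < b)%N -> tp n a b xi = 0.
  by move=> n h; case: (IH n h).
have IHB : forall n r (a b : 'I_kappa), (n + r < N)%N -> (a < b)%N -> Q n r a b = 0.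
  by move=> n r a b h hab; case: (IH _ h) => _ H; apply: H.
have Br : forall (a b : 'I_kappa) n r, (a < b)%N -> (n + r)%N = N -> (0 < r)%N -> Q n r a b = 0.
  move=> a b n r hab hnr hr; rewrite /Q big1 // => m _.
  case: (ltngtP m b) => hmb.
  - by rewrite Tup ?tp0v.
  - have inner : forall r', (r' <= N)%N -> tp (N - r') a m (T r' m b xi) = 0.
      elim=> [|r' IHr] hr'.
        by rewrite T0off ?tp0v // neq_ltn hmb orbT.
      have hN : (N - r'.+1 < N)%N by lia.
      have hn1 : (N - r'.+1).+1 = (N - r')%N by lia.
      have := CR0 a m m b xi r' (N - r'.+1)%N.
      rewrite (IHA _ hN a m) ?T0v; last by apply: ltn_trans hmb.
      rewrite hn1 IHr ?scaler0; last by lia.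
      have -> : T r' m b (tp (N - r') a m xi) = 0.
        case: r' {IHr hr' hN hn1} => [|r'].
          by rewrite T0off // neq_ltn hmb orbT.
        rewrite IHA ?T0v //; [lia | exact: ltn_trans hmb].
      have hab2 : (a == b) = false by rewrite -val_eqE ltn_eqF.
      rewrite eqxx scale1r hab2 scale0r subr0.
      rewrite -/(Q (N - r'.+1)%N r' a b) (IHB (N - r'.+1)%N r' a b) ?subr0 ?scaler0 ?subrr ?subr0 //; last by lia.
      move/eqP; rewrite scaler_eq0 => /orP [/eqP h|/eqP //].
      by move: h => /eqP; rewrite mulf_eq0 !(negbTE (sg_neq0 _)).
    by have := inner r; rewrite (_ : (N - r)%N = n) //; [apply; lia | lia].
  - have -> : m = b by apply: val_inj.
    by rewrite Tdiag tpZ IHA ?scaler0 //; lia.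
have A : forall a b : 'I_kappa, (a < b)%N -> tp N a b xi = 0.
  move=> a b hab; case: N IH IHA IHB Br => [|N] IH IHA IHB Br.
    have hab2 : (a == b) = false by rewrite -val_eqE ltn_eqF.
    by rewrite /tprime /Binv /= hab2 scaler0.
  have := LI N.+1 a b xi; rewrite big_ord_recr /= subnn.
  rewrite big1 ?add0r.
    by rewrite -/(Q N.+1 0 a b) Q0.
  move=> s _; apply: (Br a b s (N.+1 - s)%N) => //; first by have := ltn_ord s; lia.
  by rewrite subn_gt0.
split=> // a b n r hab hnr.
case: r hnr => [|r] hnr; last by apply: Br.
by move: hnr; rewrite addn0 => ->; rewrite Q0; apply: A.
Qed.

Lemma FA N (a b : 'I_kappa) : (a < b)%N -> tp N a b xi = 0.
Proof. by case: (FA_all N) => H _; apply: H. Qed.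

Lemma sgn_j (x y : bool) : sg ((x (+) y) && y) * sg (x && y) = sg y.
Proof. by rewrite sg_mul; congr sg; case: x; case: y. Qed.

Section Contract.
Variables (i f : 'I_kappa).
Hypothesis hf : val f = (val i).+1.

Definition Xs (a : 'I_kappa) r n := \sum_(l < kappa) T r a l (tp n l a xi).
Definition Ys (j : 'I_kappa) r n := \sum_(k < kappa) tp n j k (T r k j xi).
Definition cc := \sum_(j < kappa | (i < j)%N) sg (p j).
Definition Gs r n := \sum_(j < kappa | (i < j)%N) sg (p j) *: Ys j r n.
Definition Z1 r n := \sum_(j < kappa | (i < j)%N)
  ((sg ((p i (+) p j) && p j) * sg ((p i (+) p j) && p i)) *: tp n j i (T r i j xi) - T r i j (tp n j i xi)).
Definition Z2 r n := \sum_(j < kappa | (i < j)%N)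
  ((sg ((p f (+) p j) && p j) * sg ((p f (+) p j) && p f)) *: tp n j f (T r f j xi) - T r f j (tp n j f xi)).

Lemma Z1_rec r n : Z1 r.+1 n - Z1 r n.+1 = Gs r n - cc *: Xs i r n.
Proof.
rewrite /Z1 /Gs /cc -sumrB scaler_suml -sumrB; apply: eq_bigr => j hj.
rewrite CR0 sgn_j !eqxx !scale1r scalerBr //.
Qed.

Lemma Z2_rec r n : Z2 r.+1 n - Z2 r n.+1 = Gs r n - cc *: Xs f r n.
Proof.
rewrite /Z2 /Gs /cc -sumrB scaler_suml -sumrB; apply: eq_bigr => j hj.
rewrite CR0 sgn_j !eqxx !scale1r scalerBr //.
Qed.

Lemma Z1_eq r n : Z1 r n = T r i i (tp n i i xi) - Xs i r n.
Proof.
rewrite /Z1 sumrB big1 ?sub0r; last by move=> j hj; rewrite Tup // tp0v scaler0.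
rewrite /Xs [X in _ = _ - X](bigD1 i) //= [X in _ = _ - (_ + X)](bigID (fun l : 'I_kappa => (i < l)%N)) /=.
rewrite [X in _ = _ - (_ + (_ + X))]big1 ?addr0; last first.
  move=> l /andP [hl hil]; rewrite FA ?T0v //.
  by move: hl hil; rewrite -val_eqE -leqNgt /= => h1 h2; rewrite ltn_neqAle h1 h2.
rewrite opprD addrA subrr sub0r; congr (- _).
apply: eq_bigl => l; rewrite andbC; case: (ltngtP i l) => h //=.
by rewrite eq_sym -val_eqE /= neq_ltn h.
Qed.

Lemma Z2_eq r n : Z2 r n = lam f r *: tp n f f xi - Xs f r n.
Proof.
rewrite /Z2 sumrB; congr (_ - _).
  have hif : (i < f)%N by rewrite hf.
  rewrite (bigD1 f) //= big1 ?addr0.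
    by rewrite addbb /= /sgn expr0 mulr1 scale1r Tdiag tpZ.
  move=> j /andP [hj hjf]; rewrite Tup ?tp0v ?scaler0 //.
  by move: hjf; rewrite -val_eqE /= => hjf; rewrite ltn_neqAle eq_sym hjf hf.
rewrite /Xs [RHS](bigID (fun l : 'I_kappa => (i < l)%N)) /= [X in _ = _ + X]big1 ?addr0 //.
move=> l hl; rewrite FA ?T0v //; have hf' : nat_of_ord f = (nat_of_ord i).+1 := hf.
rewrite -leqNgt in hl; lia.
Qed.

Definition Dd r n := Xs i r n - Xs f r n.
Definition Ee r n := T r i i (tp n i i xi) - lam f r *: tp n f f xi.

Lemma Ee_eq r n : Ee r n = Dd r n - (Z2 r n - Z1 r n).
Proof. by rewrite Z1_eq Z2_eq /Dd /Ee e1. Qed.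

Lemma DE_rec r n : (Dd r.+1 n - Ee r.+1 n) - (Dd r n.+1 - Ee r n.+1) = cc *: Dd r n.
Proof.
rewrite !Ee_eq !subKr' sw4 Z1_rec Z2_rec subsub /Dd scalerBr //.
Qed.


Lemma tp0 (l a : 'I_kappa) w : tp 0 l a w = if l == a then w else 0.
Proof. by rewrite /tprime /Binv /=; case: eqP => [->|_]; rewrite ?sigma_ii ?scale1r ?scaler0. Qed.

Lemma Xs_0m a m : Xs a 0 m = tp m a a xi.
Proof. by rewrite /Xs /= sum_delta. Qed.
Lemma Xs_m0 a m : Xs a m 0 = T m a a xi.
Proof.
rewrite /Xs (eq_bigr (fun l : 'I_kappa => if l == a then T m a l xi else 0)) ?sum_delta' //.
by move=> l _; rewrite tp0; case: (l == a); rewrite ?T0v.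
Qed.

Lemma lam0 (a : 'I_kappa) : lam a 0%N = 1.
Proof. by case: hxi. Qed.

Lemma DE_0m m : Dd 0 m = Ee 0 m.
Proof. by rewrite /Dd /Ee !Xs_0m /= eqxx lam0 scale1r. Qed.
Lemma DE_m0 m : Dd m 0 = Ee m 0.
Proof. by rewrite /Dd /Ee !Xs_m0 !tp0 !eqxx (Tdiag m f). Qed.
Lemma Ddiag N : \sum_(r < N.+1) Dd r (N - r)%N = 0.
Proof.
rewrite /Dd sumrB /Xs.
have e : forall a, \sum_(r < N.+1) \sum_(l < kappa) T r a l (tp (N - r)%N l a xi) =
    if (N == 0%N) && (a == a) then xi else 0 by move=> a; exact: RI.
by rewrite !e !eqxx subrr.
Qed.

Lemma cc_rho : cc = rho K p i.+1.
Proof. by rewrite /cc /rho. Qed.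

Lemma step_main : (forall n, tp n f f xi = lam_prime p lam f n *: xi) ->
  forall n, tp n i i xi = lam_prime p lam i n *: xi.
Proof.
move=> IHf.
have hsub : forall N, subF cc Ee N = 0.
  case: (eqVneq cc 0) => hc.
    apply: (subst_zero (D := Dd)) => //; [exact: DE_rec | exact: DE_0m | exact: Ddiag].
  apply: (subst_main (D := Dd)) => //; [exact: DE_rec | exact: DE_0m | exact: DE_m0].
pose A m v := \sum_(r < m.+1) gam cc m r *: T r i i v.
have key : forall N, \sum_(s < N.+1) A (N - s)%N (tp s i i xi) =
    ps_mul (ps_shift cc (lam f)) (lam_prime p lam f) N *: xi.
  move=> N; have := hsub N; rewrite /subF /Ee.
  set LP := lam_prime p lam f in IHf *.
  under eq_bigr do (under eq_bigr do rewrite scalerBr; rewrite sumrB).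
  rewrite sumrB => /eqP; rewrite subr_eq0 => /eqP ->.
  rewrite /ps_mul (conv_rev N (fun u w => ps_shift cc (lam f) u * LP w)).
  rewrite scaler_suml; apply: eq_bigr => s _.
  rewrite IHf [ps_shift cc (lam f) _]ps_shift_gam mulr_suml [RHS]scaler_suml; apply: eq_bigr => r _.
  by rewrite !scalerA; congr (_ *: _); rewrite mulrA [gam _ _ _ * _]mulrC.
have := uniq_sol (A := A) (a := ps_shift cc (lam i)) (g := fun s => tp s i i xi) (x := xi).
rewrite (lam_prime_step p lam hf) -cc_rho; apply => //.
- move=> m a v w; rewrite /A scaler_sumr -big_split /=; apply: eq_bigr => r _.
  by rewrite TD TZ !scalerDr !scalerA mulrC.
- by move=> v; rewrite /A big_ord1 /gam /= subnn expr0 bin0 mulr1n mulr1 eqxx scale1r.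
- move=> m; rewrite /A [ps_shift cc (lam i) _]ps_shift_gam scaler_suml; apply: eq_bigr => r _.
  by rewrite Tdiag scalerA mulrC.
- by rewrite ps_shift_0 lam0.
Qed.
End Contract.

Lemma base_main (i : 'I_kappa) : (val i).+1 = kappa ->
  forall n, tp n i i xi = lam_prime p lam i n *: xi.
Proof.
move=> hi.
have H := uniq_sol (A := fun m v => lam i m *: v) (a := lam i) (b := ps_one K) (g := fun s => tp s i i xi) (x := xi).
rewrite ps_mul1 in H; move=> n; rewrite (lam_prime_last p lam hi); apply: H => //.
- by move=> m a v w; rewrite scalerDr !scalerA mulrC.
- by move=> v; rewrite lam0 scale1r.
- exact: lam0.
move=> N; have := LI N i i xi; rewrite eqxx andbT => e.
rewrite /ps_one; transitivity (if N == 0%N then xi else 0); last by case: (N == 0%N); rewrite ?scale1r ?scale0r.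
rewrite -e; apply: eq_bigr => s _.
rewrite (bigD1 i) //= big1 ?addr0; first by rewrite Tdiag tpZ.
move=> k hk; rewrite Tup ?tp0v //.
have hk2 : (val k < (val i).+1)%N by rewrite hi ltn_ord.
move: hk2; rewrite ltnS leq_eqVlt => /orP [/eqP e2|//].
by move: hk; rewrite -val_eqE e2 eqxx.
Qed.

Theorem main_all (i : 'I_kappa) n : tp n i i xi = lam_prime p lam i n *: xi.
Proof.
suff H : forall d (i : 'I_kappa), (kappa - (nat_of_ord i).+1)%N = d -> forall n, tp n i i xi = lam_prime p lam i n *: xi.
  exact: H.
elim=> [|d IH] j hd.
  apply: base_main => /=; have := ltn_ord j; lia.
have hlt : ((nat_of_ord j).+1 < kappa)%N by lia.
pose f := Ordinal hlt.
apply: (step_main (f := f)) => //.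
apply: IH; rewrite /=; lia.
Qed.
End HW.
End Yang.

Unset Implicit Arguments.
Set Strict Implicit.

Theorem proposition2p9 (m n : nat) (p : 'I_(m + n) -> bool)
    (hp : #|[set i | ~~ p i]| = m)
    (M : lmodType C) (t : nat -> 'I_(m + n) -> 'I_(m + n) -> M -> M)
    (ht : is_rep p t)
    (xi : M) (lam : 'I_(m + n) -> ps C)
    (hxi : is_highest_weight t xi lam) :
  forall (i : 'I_(m + n)) (r : nat),
    tprime p t r i i xi = lam_prime p lam i r *: xi.
Proof.
move=> i r; exact: (main_all ht hxi i r).
Qed.
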